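(* Let $t<n/2$ and let $\nu\vdash 2n$ be a non-fat even partition. Then the trivial representation of $K=S_{2(n-t)}\times H_t$ does not occur in the restriction $S^\nu\downarrow^{S_{2n}}_K$.
   Context: $S^\nu$ is the irreducible representation of $S_{2n}$ indexed by $\nu\vdash 2n$. $K=S_{2(n-t)}\times H_t\le S_{2n}$, where $S_{2(n-t)}$ is the symmetric group on a fixed set of $2(n-t)$ points and $H_t\cong S_2\wr S_t$ is the stabilizer of a fixed perfect matching of the complementary $2t$ points. A partition $\nu\vdash 2n$ is even if $\nu=2\lambda=(2\lambda_1,2\lambda_2,\dots)$ for some $\lambda\vdash n$; it is fat if $\nu\ge 2(n-t,1^t)=(2(n-t),2,\dots,2)$ in reverse-lexicographic order ($\mu\le\lambda$ iff $\mu=\lambda$ or $\mu_j<\lambda_j$ at the first differing index $j$), and non-fat otherwise. *)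

(* Defs.v *)
From mathcomp Require Import all_boot all_order all_algebra all_fingroup.
Set Implicit Arguments. Unset Strict Implicit. Unset Printing Implicit Defensive.
Import GRing.Theory.

Definition is_partition (m : nat) (s : seq nat) : bool :=
  [&& sorted geq s, all (fun x => 0 < x) s & sumn s == m].

Definition even_partition (n : nat) (nu : seq nat) : Prop :=
  exists la, is_partition n la /\ nu = map double la.

Definition revlex_le (mu la : seq nat) : Prop :=
  mu = la \/ exists j, (forall i, i < j -> nth 0 mu i = nth 0 la i) /\ nth 0 mu j < nth 0 la j.

Definition fat (n t : nat) (nu : seq nat) : Prop :=
  revlex_le ((n - t).*2 :: nseq t 2) nu.

(* Young diagram of nu, cells (row, column), 0-indexed. *)
Definition diagram (m : nat) (nu : seq nat) : {set 'I_m * 'I_m} :=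
  [set c : 'I_m * 'I_m | (c.2 : nat) < nth 0 nu c.1].

(* A Young tableau of shape nu |- m: a bijection from the points 'I_m
   to the cells of the diagram (injective into the diagram, which has m cells). *)
Definition is_tableau (m : nat) (nu : seq nat) (T : {ffun 'I_m -> 'I_m * 'I_m}) : bool :=
  injectiveb T && [forall x, T x \in diagram m nu].

Definition colgroup (m : nat) (T : {ffun 'I_m -> 'I_m * 'I_m}) : {set 'S_m} :=
  [set s : 'S_m | [forall x, (T (s x)).2 == (T x).2]].

(* A tabloid is recorded as the map point |-> row. *)
Definition tabloid_of (m : nat) (T : {ffun 'I_m -> 'I_m * 'I_m}) : {ffun 'I_m -> 'I_m} :=
  [ffun x => (T x).1].

Definition tabvec (m : nat) := {ffun {ffun 'I_m -> 'I_m} -> rat}.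

(* sigma T: the tableau with sigma(x) in the cell where x was. *)
Definition act_tableau (m : nat) (s : 'S_m) (T : {ffun 'I_m -> 'I_m * 'I_m})
  : {ffun 'I_m -> 'I_m * 'I_m} := [ffun y => T ((s^-1)%g y)].

Definition polytabloid (m : nat) (T : {ffun 'I_m -> 'I_m * 'I_m}) : tabvec m :=
  [ffun f => \sum_(s in colgroup T)
      (-1) ^+ (odd_perm s) * ((tabloid_of (act_tableau s T) == f)%:R)]%R.

Definition in_specht (m : nat) (nu : seq nat) (v : tabvec m) : Prop :=
  exists c : {ffun {ffun 'I_m -> 'I_m * 'I_m} -> rat},
    v = [ffun f => \sum_(T | is_tableau nu T) c T * polytabloid T f]%R.

(* Action of g on the permutation module: (g v)({t}) = v(g^-1 {t}). *)
Definition perm_act (m : nat) (g : 'S_m) (v : tabvec m) : tabvec m :=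
  [ffun f : {ffun 'I_m -> 'I_m} => v [ffun y => f (g y)]].

(* K = S_{2(n-t)} x H_t inside S_{2n}: S_{2(n-t)} acts on the points
   {0,...,2(n-t)-1}; H_t is the stabiliser of the perfect matching
   {2k,2k+1} (k = n-t,...,n-1) of the remaining 2t points. *)
Definition Kset (n t : nat) : {set 'S_(n.*2)} :=
  [set g : 'S_(n.*2) |
     [forall x : 'I_(n.*2), ((x : nat) < (n - t).*2) == ((g x : nat) < (n - t).*2)] &&
     [forall x : 'I_(n.*2), forall y : 'I_(n.*2),
        [&& (n - t).*2 <= x, (n - t).*2 <= y & (x : nat)./2 == (y : nat)./2] ==>
        ((g x : nat)./2 == (g y : nat)./2)]].

(* Main.v *)
Require Import Defs.
From mathcomp Require Import all_boot all_order all_algebra all_fingroup.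
From mathcomp Require Import zify.
From mathcomp Require Import ring lra.

Lemma pos_nth (s : seq nat) i : all (fun x => 0 < x) s -> (0 < nth 0 s i) = (i < size s).
Proof.
move=> h; case: (ltnP i (size s)) => hi.
  by rewrite (all_nthP 0 h i hi).
by rewrite nth_default.
Qed.

Lemma nonfat_head n t nu : t.*2 < n -> is_partition n.*2 nu -> even_partition n nu ->
  ~ fat n t nu -> nth 0 nu 0 < (n - t).*2.
Proof.
move=> htn /and3P[srt pos /eqP sum] [la [_ hla]] nf.
rewrite ltnNge; apply/negP => ha.
set mu := (n - t).*2 :: nseq t 2.
have ev : forall j, nth 0 nu j = (nth 0 la j).*2.
  move=> j; rewrite hla; case: (ltnP j (size la)) => hj.
    by rewrite (nth_map 0).
  by rewrite !nth_default ?size_map.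
have mupos : forall i, i <= t -> 0 < nth 0 mu i.
  by case=> [|i] hi /=; [lia | rewrite nth_nseq; case: ifP => //; lia].
have nlt : forall j, (forall i, i < j -> nth 0 mu i = nth 0 nu i) -> nth 0 nu j <= nth 0 mu j.
  move=> j hj; rewrite leqNgt; apply/negP => hlt; apply: nf; right; by exists j.
have agree : forall j, forall i, i < j -> nth 0 mu i = nth 0 nu i.
  elim=> [//|j IH] i; rewrite ltnS leq_eqVlt => /orP[/eqP -> | /IH //].
  have := nlt j IH.
  case: j IH => [|j] IH.
    by move=> h; apply/eqP; rewrite eqn_leq h ha.
  case: (ltnP j t) => hjt.
    have m2 : nth 0 mu j.+1 = 2 by rewrite /= nth_nseq hjt.
    rewrite m2 ev => hle.
    have [e0|e1] : nth 0 la j.+1 = 0 \/ nth 0 la j.+1 = 1 by lia.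
    - exfalso.
      have hsz : size nu <= j.+1.
        by rewrite leqNgt -(pos_nth _ _ pos) ev e0.
      have hsz2 : j < size nu.
        by rewrite -(pos_nth _ _ pos) -IH // mupos //; lia.
      have hs : size nu = j.+1 by lia.
      have enu : nu = take j.+1 mu.
        apply: (eq_from_nth (x0 := 0)).
          rewrite size_take /= size_nseq hs. by rewrite ltnS hjt.
        move=> k hi; rewrite nth_take; last by lia.
        by rewrite IH //; lia.
      move: sum; rewrite enu /= take_nseq; last by lia.
      rewrite sumn_nseq; lia.
    - by rewrite e1.
  have m0 : nth 0 mu j.+1 = 0 by rewrite /= nth_default // size_nseq.
  by rewrite m0 => h; apply/eqP; rewrite eq_sym -leqn0.
apply: nf; left.
have hsz : size nu = t.+1.
  apply/eqP; rewrite eqn_leq; apply/andP; split.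
    rewrite leqNgt -(pos_nth _ _ pos) -(agree t.+2) //= nth_default // size_nseq //.
  by rewrite -(pos_nth _ _ pos) -(agree t.+1) // mupos.
apply: (eq_from_nth (x0 := 0)); first by rewrite hsz /= size_nseq.
move=> i _; exact: (agree i.+1).
Qed.

Import GRing.Theory Num.Theory.
Section Aux.
Local Open Scope ring_scope.

Lemma col_tperm (m : nat) (T : {ffun 'I_m -> 'I_m * 'I_m}) (x y : 'I_m) :
  (T x).2 = (T y).2 -> forall w, (T (tperm x y w)).2 = (T w).2.
Proof. by move=> h w; case: tpermP => [->|->|//]. Qed.

Lemma poly_swap (m : nat) (T : {ffun 'I_m -> 'I_m * 'I_m}) (x y : 'I_m) :
  x != y -> (T x).2 = (T y).2 -> forall f : {ffun 'I_m -> 'I_m},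
  polytabloid T [ffun z => f (tperm x y z)] = - polytabloid T f.
Proof.
move=> nxy hc f; rewrite !ffunE.
rewrite (reindex_inj (mulIg (tperm x y))) /= -sumrN.
apply: eq_big => s.
  rewrite !inE; apply: eq_forallb => z.
  by rewrite permM col_tperm.
move=> _.
rewrite odd_permM odd_tperm nxy.
have -> : (tabloid_of (act_tableau (s * tperm x y) T) == [ffun z => f (tperm x y z)]) =
          (tabloid_of (act_tableau s T) == f).
  apply/eqP/eqP => h; apply/ffunP => z; move/ffunP: h => h.
    have := h (tperm x y z); rewrite !ffunE invMg permM tpermV tpermK => <-.
    by [].
  by rewrite !ffunE invMg permM tpermV -h !ffunE.
by case: (odd_perm s) => /=; rewrite ?expr0 ?expr1; ring.
Qed.

Definition SA (m a : nat) : {set 'S_m} :=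
  [set g : 'S_m | [forall z : 'I_m, (a <= z)%N ==> (g z == z)]].

Lemma sum_zero (m a : nat) (T : {ffun 'I_m -> 'I_m * 'I_m}) (x y : 'I_m) :
  x != y -> (T x).2 = (T y).2 -> (x < a)%N -> (y < a)%N -> forall f : {ffun 'I_m -> 'I_m},
  \sum_(g in SA m a) polytabloid T [ffun z => f (g z)] = 0.
Proof.
move=> nxy hc hx hy f.
set S := (X in X = 0).
have : S = - S.
  rewrite {1}/S (reindex_inj (mulgI (tperm x y))) /= /S -sumrN.
  apply: eq_big => g.
    rewrite !inE; apply: eq_forallb => z.
    case: (leqP a z) => //= hz.
    rewrite permM tpermD //; apply/eqP => e; subst; lia.
  move=> _; rewrite -(@poly_swap _ _ _ _ nxy hc); congr (polytabloid T _).
  by apply/ffunP => z; rewrite !ffunE permM.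
move=> h; lra.
Qed.

Lemma SA_K n t (g : 'S_(n.*2)) : g \in SA n.*2 (n - t).*2 -> g \in Kset n t.
Proof.
rewrite !inE => /forallP hg; apply/andP; split.
  apply/forallP => x; case: (leqP (n - t).*2 x) => hx.
    by rewrite (eqP (implyP (hg x) hx)) ltnNge hx.
  apply/eqP; symmetry; apply/negP => /negP; rewrite -leqNgt => hgx.
  have e := eqP (implyP (hg (g x)) hgx).
  have := perm_inj e => e2; rewrite e2 in hgx; lia.
apply/forallP => x; apply/forallP => y; apply/implyP => /and3P[hx hy e].
by rewrite (eqP (implyP (hg x) hx)) (eqP (implyP (hg y) hy)).
Qed.

End Aux.

Theorem mainTheorem16 (n t : nat) (nu : seq nat) :
  t.*2 < n ->
  is_partition n.*2 nu ->
  even_partition n nu ->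
  ~ fat n t nu ->
  forall v : tabvec n.*2,
    in_specht nu v ->
    (forall g, g \in Kset n t -> perm_act g v = v) ->
    v = 0%R.
Proof.
move=> htn hpart hev nf v [c hv] hinv.
have hc := @nonfat_head _ _ _ htn hpart hev nf.
have ham : ((n - t).*2 <= n.*2)%N by rewrite leq_double leq_subr.
have srt : sorted geq nu by case/and3P: hpart.
have colb : forall T : {ffun 'I_(n.*2) -> 'I_(n.*2) * 'I_(n.*2)}, is_tableau nu T -> forall x, ((T x).2 < nth 0 nu 0)%N.
  move=> T /andP[_ /forallP hd] x; have := hd x; rewrite inE => h.
  apply: (leq_trans h).
  case: (ltnP (T x).1 (size nu)) => hr; last by rewrite nth_default.
  apply: (sorted_leq_nth (fun a b c h1 h2 => leq_trans h2 h1) leqnn 0 srt) => //.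
  rewrite inE; exact: (leq_ltn_trans _ hr).
have zeroT : forall T, is_tableau nu T -> forall f : {ffun 'I_(n.*2) -> 'I_(n.*2)},
    (\sum_(g in SA n.*2 (n - t).*2) polytabloid T [ffun z => f (g z)] = 0)%R.
  move=> T hT f.
  pose h := fun x : 'I_((n - t).*2) => Ordinal (colb T hT (widen_ord ham x)).
  have : ~~ injectiveb h.
    apply/negP => /injectiveP hi; have := @leq_card _ _ h hi; rewrite !card_ord; lia.
  case/injectivePn => x [y nxy hxy].
  apply: (@sum_zero _ _ _ (widen_ord ham x) (widen_ord ham y)).
  - apply: contra nxy => /eqP [e]; apply/eqP/val_inj; exact: e.
  - by apply: val_inj; have := congr1 val hxy.
  - exact: (ltn_ord x).
  - exact: (ltn_ord y).
apply/ffunP => f.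
have inv : forall g, g \in SA n.*2 (n - t).*2 -> v [ffun z => f (g z)] = v f.
  move=> g hg; have := hinv g (@SA_K _ _ _ hg); move/ffunP/(_ f); by rewrite ffunE.
have hsum : (#|SA n.*2 (n - t).*2|%:R * v f = 0 :> rat)%R.
  rewrite mulr_natl -sumr_const -(eq_bigr _ inv) hv.
  under eq_bigr do rewrite ffunE.
  rewrite exchange_big big1 //= => T hT.
  by rewrite -mulr_sumr zeroT // mulr0.
have hpos : (0 < #|SA n.*2 (n - t).*2|)%N.
  apply/card_gt0P; exists 1%g; rewrite inE; apply/forallP => z; by rewrite perm1 eqxx implybT.
move/eqP: hsum; rewrite mulf_eq0 pnatr_eq0 (negbTE (lt0n_neq0 hpos)) /= => /eqP ->.
by rewrite ffunE.
Qed.
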